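(* Let $\mathbb{K}$ be a field, let $S\subseteq\mathbb{K}$ be a finite set with $0\in S$ and $|S|\ge k+1$, and let $f\in\mathbb{K}[x_1,\ldots,x_n]$ have total degree at most $k$. Then $f\equiv 0$ if and only if $f(a)=0$ for all $a\in W^k_n(S)$.
   Context: $W^k_n(S)$ denotes the set of vectors $a\in S^n$ having at most $k$ nonzero coordinates (Hamming weight at most $k$). *)

(* Defs.v *)
From HB Require Import structures.
From mathcomp Require Import all_boot all_order all_algebra.
Set Implicit Arguments. Unset Strict Implicit. Unset Printing Implicit Defensive.
Import Order.TTheory GRing.Theory Num.Theory.
Local Open Scope ring_scope.

Definition monom (n : nat) := n.-tuple nat.

Record mpoly (K : fieldType) (n : nat) := MPoly {
  mcoeff : monom n -> K ;
  msupp : seq (monom n) ;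
  msuppP : forall m, mcoeff m != 0 -> m \in msupp
}.

Definition mdegm (n : nat) (m : monom n) : nat := (\sum_(i < n) tnth m i)%N.

Definition mdeg_le (K : fieldType) (n : nat) (f : mpoly K n) (k : nat) : Prop :=
  forall m, mcoeff f m != 0 -> (mdegm m <= k)%N.

Definition mpoly_zero (K : fieldType) (n : nat) (f : mpoly K n) : Prop :=
  forall m, mcoeff f m = 0.

Definition meval_monom (K : fieldType) (n : nat) (m : monom n) (a : n.-tuple K) : K :=
  \prod_(i < n) tnth a i ^+ tnth m i.

Definition meval (K : fieldType) (n : nat) (f : mpoly K n) (a : n.-tuple K) : K :=
  \sum_(m <- undup (msupp f)) mcoeff f m * meval_monom m a.

Definition hweight (K : fieldType) (n : nat) (a : n.-tuple K) : nat :=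
  count (fun x => x != 0) a.

(* a \in W^k_n(S) : all coordinates in S and Hamming weight at most k *)
Definition inW (K : fieldType) (n k : nat) (S : seq K) (a : n.-tuple K) : Prop :=
  (forall i : 'I_n, tnth a i \in S) /\ (hweight a <= k)%N.

(* Main.v *)
Require Import Defs.
From HB Require Import structures.
From mathcomp Require Import all_boot all_order all_algebra.
Import Order.TTheory GRing.Theory Num.Theory.
Local Open Scope ring_scope.

Lemma univ (K : fieldType) (S : seq K) (b : nat -> K) : uniq S ->
  (forall x, x \in S -> \sum_(e < size S) b e * x ^+ e = 0) ->
  forall e, (e < size S)%N -> b e = 0.
Proof.
move=> uS H e he.
have p0 : \poly_(i < size S) b i = 0.
  apply/eqP; apply: contraT => pn0.
  have hr : all (root (\poly_(i < size S) b i)) S.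
    by apply/allP => x xS; rewrite /root horner_poly H.
  by have := max_poly_roots pn0 hr uS; rewrite ltnNge size_poly.
by have := coef_poly (size S) b e; rewrite p0 coef0 he => ->.
Qed.

Lemma mon_cons (K : fieldType) n (x : K) (a : n.-tuple K) (m : monom n.+1) :
  meval_monom m [tuple of x :: a] = x ^+ thead m * meval_monom [tuple of behead m] a.
Proof.
rewrite /meval_monom big_ord_recl /=; congr (_ * _).
apply: eq_bigr => i _; rewrite tnthS; congr (_ ^+ _).
by rewrite {1}(tuple_eta m) tnthS.
Qed.

Lemma grid (K : fieldType) (S : seq K) : uniq S -> forall n (L : seq (monom n))
  (c : monom n -> K), uniq L -> (forall m, m \in L -> forall i, (tnth m i < size S)%N) ->
  (forall a : n.-tuple K, (forall i, tnth a i \in S) ->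
     \sum_(m <- L) c m * meval_monom m a = 0) -> forall m, m \in L -> c m = 0.
Proof.
move=> uS; elim=> [|n IH] L c uL bL H m mL.
  have := H [tuple] (fun i => match i with Ordinal _ h => False_ind _ (notF h) end).
  rewrite (bigD1_seq m mL uL) /= big1 ?addr0.
    by rewrite /meval_monom big_ord0 mulr1.
  by move=> m' /negP; case; rewrite (tuple0 m') (tuple0 m).
pose Le (e : nat) := [seq behead_tuple t | t <- L & thead t == e].
pose ce (e : nat) := fun m' : monom n => c [tuple of e :: m'].
have H1 : forall x (a : n.-tuple K), \sum_(t <- L) c t * meval_monom t [tuple of x :: a] =
   \sum_(e < size S) (\sum_(m' <- Le e) ce e m' * meval_monom m' a) * x ^+ e.
  move=> x a.
  under [RHS]eq_bigr => e _ do rewrite big_map big_filter big_distrl big_mkcond /=.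
  rewrite exchange_big /=; apply: eq_big_seq => t tL.
  have ht : (thead t < size S)%N by exact: (bL t tL ord0).
  rewrite (bigD1 (Ordinal ht)) //= eqxx big1 ?addr0.
    rewrite mon_cons /ce -tuple_eta -mulrA [_ * x ^+ _]mulrC.
    by congr (_ * (_ * meval_monom _ _)); apply: val_inj.
  by move=> e /eqP ne; case: eqP => // he; case: ne; apply: val_inj; rewrite /= he.
have Z : forall e, (e < size S)%N -> forall a : n.-tuple K, (forall i, tnth a i \in S) ->
    \sum_(m' <- Le e) ce e m' * meval_monom m' a = 0.
  move=> e he a ha.
  apply: (@univ K S (fun e => \sum_(m' <- Le e) ce e m' * meval_monom m' a) uS _ _ he) => x xS.
  rewrite -H1; apply: H => i.
  by case: (unliftP ord0 i) => [j ->|->]; rewrite ?tnthS ?tnth0.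
have hm : (thead m < size S)%N by exact: (bL m mL ord0).
have hu : uniq (Le (thead m)).
  rewrite map_inj_in_uniq ?filter_uniq // => t1 t2.
  rewrite !mem_filter => /andP[/eqP h1 _] /andP[/eqP h2 _] hb.
  rewrite (tuple_eta t1) (tuple_eta t2) h1 h2; apply: val_inj => /=; congr (_ :: _); exact: (congr1 val hb).
have hb : forall m', m' \in Le (thead m) -> forall i, (tnth m' i < size S)%N.
  move=> m' /mapP[t]; rewrite mem_filter => /andP[_ tL] -> i.
  by rewrite tnth_behead; apply: bL.
have := IH _ _ hu hb (Z _ hm) (behead_tuple m).
rewrite /ce -tuple_eta => -> //.
by apply: map_f; rewrite mem_filter eqxx.
Qed.

Lemma count_tnth (T : Type) (p : pred T) n (t : n.-tuple T) :
  count p t = (\sum_(i < n) p (tnth t i))%N.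
Proof.
elim: n t => [|n IH] t; first by rewrite tuple0 big_ord0.
case/tupleP: t => x t; rewrite big_ord_recl /= tnth0 IH.
by congr (_ + _)%N; apply: eq_bigr => i _; rewrite tnthS.
Qed.

Lemma tnth_le_deg n (m : monom n) i : (tnth m i <= mdegm m)%N.
Proof. by rewrite /mdegm (bigD1 i) //= leq_addr. Qed.

Theorem lemma4 (K : fieldType) (n k : nat) (S : seq K) (f : mpoly K n) :
  uniq S -> 0 \in S -> (k.+1 <= size S)%N -> mdeg_le f k ->
  (mpoly_zero f <-> (forall a : n.-tuple K, inW k S a -> meval f a = 0)).
Proof.
move=> uS S0 hk hdeg; split.
  by move=> Z a _; rewrite /meval big1 // => m _; rewrite Z mul0r.
move=> HW m0; apply/eqP; apply: contraT => nz.
pose c := mcoeff f.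
pose sub (m : monom n) := [forall i, (tnth m0 i == 0%N) ==> (tnth m i == 0%N)].
pose L := [seq m <- undup (msupp f) | (c m != 0) && sub m].
have m0L : m0 \in L.
  rewrite mem_filter nz /= mem_undup (msuppP nz) andbT.
  by apply/forallP => i; apply/implyP.
have uL : uniq L by rewrite filter_uniq ?undup_uniq.
have bL : forall m, m \in L -> forall i, (tnth m i < size S)%N.
  move=> m; rewrite mem_filter => /andP[/andP[cm _] _] i.
  apply: leq_ltn_trans (tnth_le_deg _ m i) _; exact: leq_ltn_trans (hdeg m cm) hk.
have V : forall a : n.-tuple K, (forall i, tnth a i \in S) ->
    \sum_(m <- L) c m * meval_monom m a = 0.
  move=> a ha.
  pose b := [tuple (if tnth m0 i == 0%N then 0 else tnth a i) | i < n].
  have tb : forall i, tnth b i = if tnth m0 i == 0%N then 0 else tnth a i.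
    by move=> i; rewrite tnth_mktuple.
  have Wb : inW k S b.
    split; first by move=> i; rewrite tb; case: ifP.
    rewrite /hweight count_tnth; apply: leq_trans (hdeg m0 nz).
    rewrite /mdegm; apply: leq_sum => i _; rewrite tb.
    case: ifP => [_|h]; first by rewrite eqxx.
    by case: (_ != 0) => //; rewrite lt0n h.
  have := HW b Wb; rewrite /meval (bigID (fun m => (c m != 0) && sub m)) /=.
  rewrite [X in _ + X]big1 ?addr0.
    move=> h; apply: (etrans _ h); rewrite /L big_filter; apply: eq_bigr => m /andP[_ /forallP sm]; congr (_ * _).
    apply: eq_bigr => i _; rewrite tb; case: eqP => // h0.
    by move/implyP: (sm i); rewrite h0 eqxx => /(_ isT)/eqP ->; rewrite !expr0.
  move=> m; rewrite negb_and negbK => /orP[/eqP cm|]; first by move: cm; rewrite /c => ->; rewrite mul0r.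
  move=> /forallPn[i]; rewrite negb_imply => /andP[/eqP h0 hm].
  rewrite /meval_monom (bigD1 i) //= tb h0 eqxx expr0n (negbTE hm).
  by rewrite !mul0r mulr0.
have := @grid K S uS n L c uL bL V m0 m0L.
by move/eqP: nz.
Qed.
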